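(* Let $\pi$ be an irreducible permutation on $\mathcal{A}$ and let $v_1',v_2',v_3',v_4'\in\mathbb{Z}^{\mathcal{A}}$ satisfy $$\big(|\langle v_i',v_j'\rangle|\big)_{i,j=1}^4=\begin{pmatrix}0&0&0&1\\0&0&1&1\\0&1&0&1\\1&1&1&0\end{pmatrix}.$$ Then $T_{v_1'+v_2'}^2,\ T_{v_1'-v_2'}^2,\ T_{v_1'+v_3'}^2,\ T_{v_1'-v_3'}^2\in G_{\{v_1',v_2',v_3',v_4'\}}$.
   Context: $\mathcal{A}$ is a finite alphabet, $\pi=(\pi_{\mathrm t},\pi_{\mathrm b})$ a pair of bijections $\mathcal{A}\to\{1,\dots,|\mathcal{A}|\}$. $(\Omega_\pi)_{\alpha\beta}=+1$ if $\pi_{\mathrm t}(\alpha)<\pi_{\mathrm t}(\beta)$ and $\pi_{\mathrm b}(\alpha)>\pi_{\mathrm b}(\beta)$, $-1$ if $\pi_{\mathrm t}(\alpha)>\pi_{\mathrm t}(\beta)$ and $\pi_{\mathrm b}(\alpha)<\pi_{\mathrm b}(\beta)$, $0$ otherwise; $\langle u,v\rangle=u\Omega_\pi v^{\intercal}$ on $\mathbb{Z}^{\mathcal{A}}$ (identified with $H_1(M_\pi\setminus\Sigma_\pi;\mathbb{Z})$). For $v\in\mathbb{Z}^{\mathcal{A}}$ the symplectic transvection is $T_v(u)=u+\langle v,u\rangle v$. For a set $V\subseteq\mathbb{Z}^{\mathcal{A}}$, $G_V$ is the group generated by $\{T_v\}_{v\in V}$. *)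

(* Defs.v *)
From HB Require Import structures.
From mathcomp Require Import all_boot all_order all_algebra.
Set Implicit Arguments. Unset Strict Implicit. Unset Printing Implicit Defensive.
Import Order.TTheory GRing.Theory Num.Theory.
Local Open Scope ring_scope.

(* A permutation pi = (pi_t, pi_b) on the finite alphabet A: a pair of
   bijections A -> {0,...,|A|-1} (positions shifted by one w.r.t. the paper). *)
Definition is_perm_pair (A : finType) (pt pb : A -> 'I_#|A|) : Prop :=
  bijective pt /\ bijective pb.

Definition irreducible_perm (A : finType) (pt pb : A -> 'I_#|A|) : Prop :=
  forall k : nat, (0 < k)%N -> (k < #|A|)%N ->
    [set a | (pt a < k)%N] != [set a | (pb a < k)%N].

Definition Omega (A : finType) (pt pb : A -> 'I_#|A|) (a b : A) : int :=
  if ((pt a < pt b)%N && (pb b < pb a)%N) then 1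
  else if ((pt b < pt a)%N && (pb a < pb b)%N) then -1
  else 0.

Notation vec A := {ffun A -> int}.

Definition omega_form (A : finType) (pt pb : A -> 'I_#|A|) (u v : vec A) : int :=
  \sum_(a : A) \sum_(b : A) u a * Omega pt pb a b * v b.

Definition transv (A : finType) (pt pb : A -> 'I_#|A|) (v : vec A) (u : vec A)
  : vec A := [ffun a => u a + omega_form pt pb v u * v a].

Definition transv_inv (A : finType) (pt pb : A -> 'I_#|A|) (v : vec A) (u : vec A)
  : vec A := [ffun a => u a - omega_form pt pb v u * v a].

Inductive gen_word (A : finType) (pt pb : A -> 'I_#|A|) (V : vec A -> Prop)
  : (vec A -> vec A) -> Prop :=
| gw_id : gen_word pt pb V id
| gw_T : forall f v, V v -> gen_word pt pb V f ->
    gen_word pt pb V (transv pt pb v \o f)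
| gw_Tinv : forall f v, V v -> gen_word pt pb V f ->
    gen_word pt pb V (transv_inv pt pb v \o f).

Definition in_G (A : finType) (pt pb : A -> 'I_#|A|) (V : vec A -> Prop)
  (g : vec A -> vec A) : Prop :=
  exists f, gen_word pt pb V f /\ f =1 g.

Definition abs_table : seq (seq int) :=
  [:: [:: 0; 0; 0; 1];
      [:: 0; 0; 1; 1];
      [:: 0; 1; 0; 1];
      [:: 1; 1; 1; 0]].

(* Main.v *)
Require Import Defs.
From HB Require Import structures.
From mathcomp Require Import all_boot all_order all_algebra.
From mathcomp Require Import ring.
Import Order.TTheory GRing.Theory Num.Theory.
Set Implicit Arguments. Unset Strict Implicit.
Local Open Scope ring_scope.

Definition lin (A : finType) (u : vec A) (k : int) (w : vec A) : vec A :=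
  [ffun i => u i + k * w i].

Lemma Omega_anti (A : finType) (pt pb : A -> 'I_#|A|) a b :
  Omega pt pb a b = - Omega pt pb b a.
Proof.
rewrite /Omega.
case: (ltngtP (pt a) (pt b)) => h1; case: (ltngtP (pb a) (pb b)) => h2 //=.
Qed.

Lemma F_anti (A : finType) (pt pb : A -> 'I_#|A|) u v :
  omega_form pt pb u v = - omega_form pt pb v u.
Proof.
rewrite /omega_form exchange_big /= -sumrN; apply: eq_bigr => a _.
rewrite -sumrN; apply: eq_bigr => b _.
rewrite Omega_anti; ring.
Qed.

Lemma F_self (A : finType) (pt pb : A -> 'I_#|A|) u :
  omega_form pt pb u u = 0.
Proof.
have h := F_anti pt pb u u.
have : (2:int) * omega_form pt pb u u = 0 by rewrite mulr2n mulrDl !mul1r {1}h addNr.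
by move/eqP; rewrite mulf_eq0 => /orP [//|/eqP ->].
Qed.

Lemma Flin_r (A : finType) (pt pb : A -> 'I_#|A|) v u k w :
  omega_form pt pb v (lin u k w) = omega_form pt pb v u + k * omega_form pt pb v w.
Proof.
rewrite /omega_form mulr_sumr -big_split; apply: eq_bigr => a _ /=.
rewrite mulr_sumr -big_split; apply: eq_bigr => b _ /=.
rewrite ffunE; ring.
Qed.

Lemma Flin_l (A : finType) (pt pb : A -> 'I_#|A|) v u k w :
  omega_form pt pb (lin u k w) v = omega_form pt pb u v + k * omega_form pt pb w v.
Proof.
by rewrite F_anti Flin_r (F_anti pt pb v u) (F_anti pt pb v w); ring.
Qed.

Lemma transvE (A : finType) (pt pb : A -> 'I_#|A|) v u :
  transv pt pb v u = lin u (omega_form pt pb v u) v.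
Proof. by []. Qed.

Lemma transv_invE (A : finType) (pt pb : A -> 'I_#|A|) v u :
  transv_inv pt pb v u = lin u (- omega_form pt pb v u) v.
Proof. by apply/ffunP => i; rewrite !ffunE; ring. Qed.

Lemma conjT (A : finType) (pt pb : A -> 'I_#|A|) (k : int) w v u :
  lin (transv pt pb v (lin u (- (k * omega_form pt pb w u)) w))
      (k * omega_form pt pb w (transv pt pb v (lin u (- (k * omega_form pt pb w u)) w))) w
  = transv pt pb (lin v (k * omega_form pt pb w v) w) u.
Proof.
rewrite !transvE !Flin_r ?Flin_l ?Flin_r F_self (F_anti pt pb v w).
apply/ffunP => i; rewrite !ffunE; ring.
Qed.

Definition R3 (A : finType) (a b c u : vec A) (x y z : int) : vec A :=
  lin (lin (lin u x a) y b) z c.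

Lemma FR (A : finType) (pt pb : A -> 'I_#|A|) a b c u x y z v :
  omega_form pt pb v (R3 a b c u x y z) =
  omega_form pt pb v u + x * omega_form pt pb v a + y * omega_form pt pb v b
  + z * omega_form pt pb v c.
Proof. by rewrite /R3 !Flin_r. Qed.

Lemma TA (A : finType) (pt pb : A -> 'I_#|A|) a b c u x y z :
  transv pt pb a (R3 a b c u x y z) =
  R3 a b c u (x + omega_form pt pb a (R3 a b c u x y z)) y z.
Proof. by apply/ffunP => i; rewrite /R3 !ffunE; ring. Qed.
Lemma TB (A : finType) (pt pb : A -> 'I_#|A|) a b c u x y z :
  transv pt pb b (R3 a b c u x y z) =
  R3 a b c u x (y + omega_form pt pb b (R3 a b c u x y z)) z.
Proof. by apply/ffunP => i; rewrite /R3 !ffunE; ring. Qed.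
Lemma TC (A : finType) (pt pb : A -> 'I_#|A|) a b c u x y z :
  transv pt pb c (R3 a b c u x y z) =
  R3 a b c u x y (z + omega_form pt pb c (R3 a b c u x y z)).
Proof. by apply/ffunP => i; rewrite /R3 !ffunE; ring. Qed.
Lemma TD (A : finType) (pt pb : A -> 'I_#|A|) a b c u x y z s :
  transv pt pb (lin a s b) (R3 a b c u x y z) =
  R3 a b c u (x + omega_form pt pb (lin a s b) (R3 a b c u x y z))
     (y + s * omega_form pt pb (lin a s b) (R3 a b c u x y z)) z.
Proof. by apply/ffunP => i; rewrite /R3 !ffunE; ring. Qed.
Lemma R000 (A : finType) (a b c u : vec A) : R3 a b c u 0 0 0 = u.
Proof. by apply/ffunP => i; rewrite /R3 !ffunE; ring. Qed.

Lemma pm1 (x : int) : `|x| = 1 -> x = 1 \/ x = -1.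
Proof.
by case: x => [[|[|n]]|[|n]] //= _; [left|right].
Qed.

Lemma chain (A : finType) (pt pb : A -> 'I_#|A|) (a b c : vec A) (al be : int) u :
  omega_form pt pb a b = 0 -> omega_form pt pb a c = al ->
  omega_form pt pb b c = be -> (al = 1 \/ al = -1) -> (be = 1 \/ be = -1) ->
  let W := transv pt pb a \o transv pt pb c \o transv pt pb b in
  W (W (W (W u))) = transv pt pb (lin a (- (al * be)) b)
                       (transv pt pb (lin a (- (al * be)) b) u).
Proof.
move=> Fab Fac Fbc hal hbe W.
have Fba : omega_form pt pb b a = 0 by rewrite F_anti Fab oppr0.
have Fca : omega_form pt pb c a = - al by rewrite F_anti Fac.
have Fcb : omega_form pt pb c b = - be by rewrite F_anti Fbc.
rewrite -(R000 a b c u) /W /=.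
rewrite TB TC TA TB TC TA TB TC TA TB TC TA TD TD.
rewrite !Flin_l !FR !F_self Fab Fac Fbc Fba Fca Fcb.
by case: hal => ->; case: hbe => ->; congr R3; ring.
Qed.

Lemma conj1 (A : finType) (pt pb : A -> 'I_#|A|) w v u :
  transv pt pb w (transv pt pb v (transv_inv pt pb w u)) =
  transv pt pb (transv pt pb w v) u.
Proof.
rewrite !transv_invE !transvE !Flin_r ?Flin_l ?Flin_r F_self (F_anti pt pb v w).
apply/ffunP => i; rewrite !ffunE; ring.
Qed.

Lemma conj2 (A : finType) (pt pb : A -> 'I_#|A|) w v u :
  transv_inv pt pb w (transv pt pb v (transv pt pb w u)) =
  transv pt pb (transv_inv pt pb w v) u.
Proof.
rewrite !transv_invE !transvE !Flin_r ?Flin_l ?Flin_r F_self (F_anti pt pb v w).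
apply/ffunP => i; rewrite !ffunE; ring.
Qed.

Lemma inG_ext (A : finType) (pt pb : A -> 'I_#|A|) V f g :
  in_G pt pb V f -> f =1 g -> in_G pt pb V g.
Proof. by case=> h [w e] fg; exists h; split => // x; rewrite e fg. Qed.

Lemma gw_comp (A : finType) (pt pb : A -> 'I_#|A|) V f g :
  gen_word pt pb V f -> gen_word pt pb V g -> gen_word pt pb V (f \o g).
Proof.
elim=> [|f' v Vv _ IH|f' v Vv _ IH] gg //.
- exact: (gw_T Vv (IH gg)).
- exact: (gw_Tinv Vv (IH gg)).
Qed.

Lemma inG_comp (A : finType) (pt pb : A -> 'I_#|A|) V f g :
  in_G pt pb V f -> in_G pt pb V g -> in_G pt pb V (f \o g).
Proof.
case=> f' [wf ef] [g' [wg eg]]; exists (f' \o g'); split.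
  exact: gw_comp.
by move=> x /=; rewrite eg ef.
Qed.

Lemma inG_T (A : finType) (pt pb : A -> 'I_#|A|) (V : vec A -> Prop) v :
  V v -> in_G pt pb V (transv pt pb v).
Proof. by move=> Vv; exists (transv pt pb v \o id); split => //; apply: gw_T => //; apply: gw_id. Qed.

Lemma inG_Ti (A : finType) (pt pb : A -> 'I_#|A|) (V : vec A -> Prop) v :
  V v -> in_G pt pb V (transv_inv pt pb v).
Proof. by move=> Vv; exists (transv_inv pt pb v \o id); split => //; apply: gw_Tinv => //; apply: gw_id. Qed.

Lemma inG_conj1 (A : finType) (pt pb : A -> 'I_#|A|) V w v :
  V w -> in_G pt pb V (transv pt pb v) -> in_G pt pb V (transv pt pb (transv pt pb w v)).
Proof.
move=> Vw hv.
apply: (inG_ext (f := transv pt pb w \o transv pt pb v \o transv_inv pt pb w)).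
  by apply: inG_comp; [apply: inG_comp => //; apply: inG_T|apply: inG_Ti].
by move=> x /=; rewrite conj1.
Qed.

Lemma inG_conj2 (A : finType) (pt pb : A -> 'I_#|A|) V w v :
  V w -> in_G pt pb V (transv pt pb v) -> in_G pt pb V (transv pt pb (transv_inv pt pb w v)).
Proof.
move=> Vw hv.
apply: (inG_ext (f := transv_inv pt pb w \o transv pt pb v \o transv pt pb w)).
  by apply: inG_comp; [apply: inG_comp => //; apply: inG_Ti|apply: inG_T].
by move=> x /=; rewrite conj2.
Qed.

Lemma inG_chain (A : finType) (pt pb : A -> 'I_#|A|) V (a b c : vec A) (al be : int) :
  in_G pt pb V (transv pt pb a) -> in_G pt pb V (transv pt pb b) ->
  in_G pt pb V (transv pt pb c) ->
  omega_form pt pb a b = 0 -> omega_form pt pb a c = al ->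
  omega_form pt pb b c = be -> (al = 1 \/ al = -1) -> (be = 1 \/ be = -1) ->
  in_G pt pb V (transv pt pb (lin a (- (al * be)) b) \o transv pt pb (lin a (- (al * be)) b)).
Proof.
move=> ha hb hc Fab Fac Fbc hal hbe.
set W := transv pt pb a \o transv pt pb c \o transv pt pb b.
have hW : in_G pt pb V W by apply: inG_comp => //; apply: inG_comp.
apply: (inG_ext (f := W \o W \o W \o W)).
  by do 3! apply: inG_comp => //.
move=> x; have h := chain x Fab Fac Fbc hal hbe; rewrite /= in h; by rewrite /W /= h.
Qed.

Lemma lin1 (A : finType) (a b : vec A) : lin a (- (-1)) b = a + b.
Proof. by apply/ffunP => i; rewrite !ffunE; ring. Qed.
Lemma linm1 (A : finType) (a b : vec A) : lin a (- 1) b = a - b.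
Proof. by apply/ffunP => i; rewrite !ffunE; ring. Qed.

Lemma pm1_mul (x y : int) : (x = 1 \/ x = -1) -> (y = 1 \/ y = -1) ->
  x * y = 1 \/ x * y = -1.
Proof. by case=> ->; case=> ->; [left|right|right|left]. Qed.

Lemma pair_lemma (A : finType) (pt pb : A -> 'I_#|A|) (V : vec A -> Prop) a b c e :
  V a -> V b -> V c -> V e ->
  omega_form pt pb a b = 0 -> `|omega_form pt pb a c| = 1 ->
  `|omega_form pt pb b c| = 1 -> `|omega_form pt pb b e| = 1 ->
  `|omega_form pt pb e c| = 1 -> omega_form pt pb a e = 0 ->
  in_G pt pb V (transv pt pb (a + b) \o transv pt pb (a + b)) /\
  in_G pt pb V (transv pt pb (a - b) \o transv pt pb (a - b)).
Proof.
move=> Va Vb Vc Ve Fab /pm1 hac /pm1 hbc /pm1 hbe /pm1 hec Fae.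
have hTa := inG_T pt pb Va; have hTb := inG_T pt pb Vb; have hTc := inG_T pt pb Vc.
have C1 := inG_chain hTa hTb hTc Fab erefl erefl hac hbc.
set al := omega_form pt pb a c in C1 hac *.
set be := omega_form pt pb b c in C1 hbc *.
have Fee := F_self pt pb e.
have [c2 [hc2 [F1 F2]]] : exists c2, in_G pt pb V (transv pt pb c2) /\
    omega_form pt pb a c2 = al /\ omega_form pt pb b c2 = - be.
  have hs := pm1_mul hec hbe.
  have [hs1|hs1] : omega_form pt pb e c * omega_form pt pb b e = - be \/
            omega_form pt pb e c * omega_form pt pb b e = be.
    by case: hs => ->; case: hbc => ->; auto.
  - exists (transv pt pb e (transv pt pb e c)); split.
      by do 2! apply: inG_conj1 => //.
    rewrite !transvE !Flin_r Fae Fee; split; first by ring.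
    rewrite -/be; set X := omega_form pt pb e c; set Y := omega_form pt pb b e.
    match goal with |- ?l = _ => have -> : l = be + 2 * (X * Y) by rewrite /X /Y; ring end.
    by rewrite hs1; ring.
  - exists (transv_inv pt pb e (transv_inv pt pb e c)); split.
      by do 2! apply: inG_conj2 => //.
    rewrite !transv_invE !Flin_r Fae Fee; split; first by ring.
    rewrite -/be; set X := omega_form pt pb e c; set Y := omega_form pt pb b e.
    match goal with |- ?l = _ => have -> : l = be - 2 * (X * Y) by rewrite /X /Y; ring end.
    by rewrite hs1; ring.
have hbe' : - be = 1 \/ - be = -1 by case: hbc => ->; auto.
have C2 := inG_chain hTa hTb hc2 Fab F1 F2 hac hbe'.
have e2 : - (al * - be) = al * be by ring.
rewrite e2 in C2.
case: (pm1_mul hac hbc) => hp; rewrite hp in C1 C2.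
- by rewrite linm1 in C1; rewrite -(opprK 1) lin1 in C2.
- by rewrite lin1 in C1; rewrite linm1 in C2.
Qed.
Unset Implicit Arguments.

Theorem corollary2p10 (A : finType) (pt pb : A -> 'I_#|A|)
  (v1 v2 v3 v4 : {ffun A -> int}) :
  is_perm_pair pt pb ->
  irreducible_perm pt pb ->
  (forall i j : 'I_4,
     `|omega_form pt pb (nth 0 [:: v1; v2; v3; v4] i)
                        (nth 0 [:: v1; v2; v3; v4] j)|
     = nth 0 (nth [::] abs_table i) j) ->
  let V := fun w => w = v1 \/ w = v2 \/ w = v3 \/ w = v4 in
  in_G pt pb V (transv pt pb (v1 + v2) \o transv pt pb (v1 + v2)) /\
  in_G pt pb V (transv pt pb (v1 - v2) \o transv pt pb (v1 - v2)) /\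
  in_G pt pb V (transv pt pb (v1 + v3) \o transv pt pb (v1 + v3)) /\
  in_G pt pb V (transv pt pb (v1 - v3) \o transv pt pb (v1 - v3)).
Proof.
move=> _ _ H V.
have h12 := H (@Ordinal 4 0 isT) (@Ordinal 4 1 isT).
have h13 := H (@Ordinal 4 0 isT) (@Ordinal 4 2 isT).
have h14 := H (@Ordinal 4 0 isT) (@Ordinal 4 3 isT).
have h23 := H (@Ordinal 4 1 isT) (@Ordinal 4 2 isT).
have h24 := H (@Ordinal 4 1 isT) (@Ordinal 4 3 isT).
have h32 := H (@Ordinal 4 2 isT) (@Ordinal 4 1 isT).
have h34 := H (@Ordinal 4 2 isT) (@Ordinal 4 3 isT).
have h42 := H (@Ordinal 4 3 isT) (@Ordinal 4 1 isT).
have h43 := H (@Ordinal 4 3 isT) (@Ordinal 4 2 isT).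
simpl in h12, h13, h14, h23, h24, h32, h34, h42, h43.
move/eqP: h12; rewrite normr_eq0 => /eqP h12.
move/eqP: h13; rewrite normr_eq0 => /eqP h13.
have V1 : V v1 by left.
have V2 : V v2 by right; left.
have V3 : V v3 by right; right; left.
have V4 : V v4 by right; right; right.
have [P1 P2] := pair_lemma V1 V2 V4 V3 h12 h14 h24 h23 h34 h13.
have [P3 P4] := pair_lemma V1 V3 V4 V2 h13 h14 h34 h32 h24 h12.
by split; [|split; [|split]].
Qed.
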